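(* Let $G$ be an infinite finitely generated residually finite group, $S$ a finite symmetric generating set, and $(X_n)_{n\ge0}$ the lazy random walk on $\mathrm{Cay}(G,S)$. If $\sum_{k\ge2}\frac{1}{[G:\Lambda_k]}$ diverges, then $\lim_{n\to\infty}\mathbb{E}[D_G(X_n)]=\infty$.
   Context: For $g\ne e$, $D_G(g)=\min\{[G:N]: N\lhd G\text{ of finite index},\ g\notin N\}$, and $D_G(e)=0$. For $k\ge2$, $\Lambda_k$ is the intersection of all normal subgroups of $G$ of index at most $k$. The lazy random walk on $\mathrm{Cay}(G,S)$ is the Markov chain with $X_0=e$ and transition matrix $\frac12 I+\frac12P$, where $P(x,y)=\frac1{|S|}\#\{s\in S:y=xs\}$. *)

(* Defs.v *)
From mathcomp Require Import all_boot all_order all_algebra.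
From mathcomp Require Import boolp reals.
Set Implicit Arguments. Unset Strict Implicit. Unset Printing Implicit Defensive.
Import Order.TTheory GRing.Theory Num.Theory.

Record group := Group {
  carrier :> Type;
  gmul : carrier -> carrier -> carrier;
  ginv : carrier -> carrier;
  gone : carrier;
  gmulA : forall x y z, gmul x (gmul y z) = gmul (gmul x y) z;
  gmul1 : forall x, gmul gone x = x;
  gmulV : forall x, gmul (ginv x) x = gone
}.

Section GroupDefs.
Variable G : group.
Local Notation "x * y" := (gmul x y).
Local Notation "x ^-1" := (ginv x).
Local Notation e := (gone G).

Definition infinite_group : Prop :=
  forall n : nat, ~ exists f : 'I_n -> G, forall x : G, exists i, f i = x.

Definition normal_subgroup (N : G -> Prop) : Prop :=
  [/\ N e, (forall x y, N x -> N y -> N (x * y^-1))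
    & (forall g x, N x -> N ((g^-1 * x) * g))].

(* H has index m in G: there is a surjection G -> 'I_m whose fibres are
   exactly the left cosets of H, i.e. a bijection G/H ~ 'I_m. *)
Definition has_index (H : G -> Prop) (m : nat) : Prop :=
  exists f : G -> 'I_m, (forall i, exists x, f x = i) /\
     (forall x y, f x = f y <-> H (x^-1 * y)).

Definition finite_index_normal (N : G -> Prop) : Prop :=
  normal_subgroup N /\ exists m, has_index N m.

Definition residually_finite : Prop :=
  forall g : G, g <> e -> exists N, finite_index_normal N /\ ~ N g.

Lemma exists_asbool (P : nat -> Prop) : (exists m, P m) -> exists m, `[< P m >].
Proof. by case=> m Pm; exists m; apply/asboolP. Qed.

Definition least_nat (P : nat -> Prop) : nat :=
  match pselect (exists m, P m) with
  | left h => ex_minn (exists_asbool h)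
  | right _ => 0%N
  end.

(* [G : H] as a natural number (0 if the index is infinite). *)
Definition gindex (H : G -> Prop) : nat := least_nat (has_index H).

(* D_G(g) = min{[G:N] : N normal of finite index, g \notin N}; the minimum
   over the empty set (g = e) is 0, matching D_G(e) = 0. *)
Definition D (g : G) : nat :=
  least_nat (fun m => exists N, normal_subgroup N /\ has_index N m /\ ~ N g).

Definition Lambda (k : nat) : G -> Prop :=
  fun x => forall N, normal_subgroup N ->
             (exists m, (m <= k)%N /\ has_index N m) -> N x.

Definition symmetric_gens k (gens : 'I_k -> G) : Prop :=
  forall i, exists j, gens j = (gens i)^-1.

Definition word_prod k (gens : 'I_k -> G) (w : seq 'I_k) : G :=
  foldl (fun a i => a * gens i) e w.

Definition generates k (gens : 'I_k -> G) : Prop :=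
  forall x : G, exists w : seq 'I_k, x = word_prod gens w.

(* Lazy random walk: each step is None (stay, prob 1/2) or Some i
   (multiply on the right by gens i, prob 1/(2|S|)). *)
Definition lazy_step k (gens : 'I_k -> G) (x : G) (s : option 'I_k) : G :=
  match s with None => x | Some i => x * gens i end.

Definition walk_pos k (gens : 'I_k -> G) n (w : n.-tuple (option 'I_k)) : G :=
  foldl (lazy_step gens) e w.

Definition step_prob (R : realType) k (s : option 'I_k) : R :=
  match s with None => 2^-1 | Some _ => (2 * k%:R)^-1 end%R.

Definition lazy_walk_expect (R : realType) k (gens : 'I_k -> G) (f : G -> R)
    (n : nat) : R :=
  (\sum_(w : n.-tuple (option 'I_k))
      (\prod_(i < n) step_prob R (tnth w i)) * f (walk_pos gens w))%R.

End GroupDefs.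

(* Main.v *)
Require Import Defs.
From mathcomp Require Import all_boot all_order all_algebra.
From mathcomp Require Import boolp reals.
From mathcomp Require Import ring lra zify.
Set Implicit Arguments. Unset Strict Implicit. Unset Printing Implicit Defensive.
Import Order.TTheory GRing.Theory Num.Theory.
Local Open Scope ring_scope.

Section GroupLemmas.
Variable G : group.
Local Notation e := (gone G).

Lemma gmulV' (x : G) : gmul x (ginv x) = e.
Proof.
set y := gmul x (ginv x).
have yy : gmul y y = y.
  by rewrite /y -gmulA (gmulA (ginv x) x (ginv x)) gmulV gmul1.
by rewrite -[y in LHS]gmul1 -(gmulV y) -gmulA yy.
Qed.

Lemma gmul1r (x : G) : gmul x e = x.
Proof. by rewrite -(gmulV x) gmulA gmulV' gmul1. Qed.

Lemma gmulI (a b c : G) : gmul a b = gmul a c -> b = c.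
Proof. by move=> H; rewrite -[b]gmul1 -(gmulV a) -gmulA H gmulA gmulV gmul1. Qed.

Lemma ginvK (x : G) : ginv (ginv x) = x.
Proof. by rewrite -[RHS]gmul1 -(gmulV (ginv x)) -gmulA gmulV gmul1r. Qed.

Lemma ginvM (x y : G) : ginv (gmul x y) = gmul (ginv y) (ginv x).
Proof.
apply: (@gmulI (gmul x y)); rewrite gmulV' -gmulA (gmulA y (ginv y)) gmulV' gmul1.
by rewrite gmulV'.
Qed.

Lemma ginv1 : ginv e = e.
Proof. by rewrite -[LHS]gmul1r gmulV. Qed.

Lemma gmulKV (x y : G) : gmul x (gmul (ginv x) y) = y.
Proof. by rewrite gmulA gmulV' gmul1. Qed.

Lemma ginv_eq1 (x y : G) : gmul (ginv x) y = e -> x = y.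
Proof. by move=> H; rewrite -(gmulKV x y) H gmul1r. Qed.

Variable N : G -> Prop.
Hypothesis hN : normal_subgroup N.

Lemma N1 : N e. Proof. by case: hN. Qed.
Lemma NV x : N x -> N (ginv x).
Proof. by case: hN => n1 nB _ nx; have := nB _ _ n1 nx; rewrite gmul1. Qed.
Lemma NM x y : N x -> N y -> N (gmul x y).
Proof. by case: hN => n1 nB _ nx ny; have := nB _ _ nx (NV ny); rewrite ginvK. Qed.
Lemma Ncomm a b : N (gmul a b) -> N (gmul b a).
Proof. by case: hN => _ _ nC H; have := nC a _ H; rewrite gmulA gmulV gmul1. Qed.
Lemma Nconj g x : N x -> N (gmul (gmul (ginv g) x) g).
Proof. by case: hN => _ _ nC; apply: nC. Qed.
End GroupLemmas.

Lemma foldl_wp (G : group) k (gens : 'I_k -> G) (w : seq 'I_k) (x : G) :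
  foldl (fun a i => gmul a (gens i)) x w = gmul x (word_prod gens w).
Proof.
rewrite /word_prod; elim: w x => [|s w IH] x /=; first by rewrite gmul1r.
by rewrite IH (IH (gmul _ _)) gmul1 gmulA.
Qed.

Lemma sum_option (R : realType) (T : finType) (F : option T -> R) :
  \sum_(s : option T) F s = F None + \sum_(t : T) F (Some t).
Proof.
rewrite /index_enum !unlock /=. congr (_ + _).
by rewrite /reducebig foldr_map Finite.enum.unlock.
Qed.

Lemma sum_tuple_cons (R : realType) (T : finType) n (F : n.+1.-tuple T -> R) :
  \sum_(w : n.+1.-tuple T) F w =
  \sum_(s : T) \sum_(w : n.-tuple T) F [tuple of s :: w].
Proof.
rewrite pair_big /=.
rewrite (reindex (fun p : T * n.-tuple T => [tuple of p.1 :: p.2])) //.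
exists (fun t : n.+1.-tuple T => (thead t, [tuple of behead t])).
  by case=> x t _ /=; rewrite theadE; congr pair; apply: val_inj.
by move=> t _; rewrite [RHS]tuple_eta; apply: val_inj.
Qed.

Section Walk.
Variable R : realType.
Variable G : group.
Variable k : nat.
Variable gens : 'I_k -> G.
Hypothesis k_gt0 : (0 < k)%N.
Local Notation e := (gone G).

Definition Aop (h : G -> R) (x : G) : R :=
  \sum_(s : option 'I_k) step_prob R s * h (lazy_step gens x s).

Lemma step_prob_ge0 (s : option 'I_k) : 0 <= step_prob R s.
Proof. by case: s => [i|] /=; rewrite invr_ge0 // mulr_ge0. Qed.

Lemma sum_step_prob : \sum_(s : option 'I_k) step_prob R s = 1.
Proof.
rewrite sum_option /= sumr_const card_ord.
have kn0 : (k%:R : R) != 0 by rewrite pnatr_eq0 -lt0n.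
rewrite -mulr_natr; field; exact: kn0.
Qed.

Lemma walkE n (f : G -> R) x :
  \sum_(w : n.-tuple (option 'I_k))
     (\prod_(i < n) step_prob R (tnth w i)) * f (foldl (lazy_step gens) x w)
  = iter n Aop f x.
Proof.
elim: n f x => [|n IH] f x.
  rewrite /= (eq_bigr (fun _ => f x)); last first.
    by move=> w _; rewrite big_ord0 mul1r tuple0.
  by rewrite sumr_const card_tuple expn0.
rewrite sum_tuple_cons iterS /Aop; apply: eq_bigr => s _.
rewrite -(IH f (lazy_step gens x s)) mulr_sumr; apply: eq_bigr => w _.
by rewrite big_ord_recl tnth0 /= -mulrA; congr (_ * (_ * _));
  apply: eq_bigr => i _; rewrite tnthS.
Qed.

Lemma expectE (f : G -> R) n : lazy_walk_expect gens f n = iter n Aop f e.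
Proof. by rewrite /lazy_walk_expect -walkE. Qed.

Lemma Aop_ext h1 h2 x : (forall y, h1 y = h2 y) -> Aop h1 x = Aop h2 x.
Proof. by move=> H; apply: eq_bigr => s _; rewrite H. Qed.

Lemma Aop_mono h1 h2 x : (forall y, h1 y <= h2 y) -> Aop h1 x <= Aop h2 x.
Proof. by move=> H; apply: ler_sum => s _; rewrite ler_wpM2l ?step_prob_ge0. Qed.

Lemma Aop_lin h1 h2 b x :
  Aop (fun y => h1 y + b * h2 y) x = Aop h1 x + b * Aop h2 x.
Proof.
rewrite /Aop mulr_sumr -big_split; apply: eq_bigr => s _ /=; ring.
Qed.

Lemma Aop_const a x : Aop (fun _ => a) x = a.
Proof. by rewrite /Aop -mulr_suml sum_step_prob mul1r. Qed.

Lemma Aop_sum (I : Type) (r : seq I) (P : pred I) (F : I -> G -> R) x :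
  Aop (fun y => \sum_(i <- r | P i) F i y) x = \sum_(i <- r | P i) Aop (F i) x.
Proof.
rewrite /Aop exchange_big; apply: eq_bigr => s _; by rewrite mulr_sumr.
Qed.

Lemma Aop_transl h r x : Aop (fun y => h (gmul r y)) x = Aop h (gmul r x).
Proof. by apply: eq_bigr => [[i|]] _ //=; rewrite gmulA. Qed.

Lemma Aop_single h x (s : option 'I_k) : (forall y, 0 <= h y) ->
  step_prob R s * h (lazy_step gens x s) <= Aop h x.
Proof.
move=> h0; rewrite /Aop (bigD1 s) //= lerDl sumr_ge0 // => t _.
by rewrite mulr_ge0 ?step_prob_ge0.
Qed.

Lemma iter_ext n h1 h2 : (forall y, h1 y = h2 y) ->
  forall x, iter n Aop h1 x = iter n Aop h2 x.
Proof. by elim: n => [|n IH] H x //=; apply: Aop_ext => y; apply: IH. Qed.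

Lemma iter_mono n h1 h2 : (forall y, h1 y <= h2 y) ->
  forall x, iter n Aop h1 x <= iter n Aop h2 x.
Proof. by elim: n => [|n IH] H x //=; apply: Aop_mono => y; apply: IH. Qed.

Lemma iter_lin n h1 h2 b x :
  iter n Aop (fun y => h1 y + b * h2 y) x = iter n Aop h1 x + b * iter n Aop h2 x.
Proof.
elim: n x => [|n IH] x //=.
by rewrite -Aop_lin; apply: Aop_ext => y; rewrite IH.
Qed.

Lemma iter_const n a x : iter n Aop (fun _ => a) x = a.
Proof.
elim: n x => [|n IH] x //=.
by rewrite (@Aop_ext _ (fun _ => a)) ?Aop_const.
Qed.

Lemma iter_affine n a b h x :
  iter n Aop (fun y => a + b * h y) x = a + b * iter n Aop h x.
Proof. by rewrite (iter_lin n (fun _ => a)) iter_const. Qed.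

Lemma iter_sum n (I : Type) (r : seq I) (P : pred I) (F : I -> G -> R) x :
  iter n Aop (fun y => \sum_(i <- r | P i) F i y) x
  = \sum_(i <- r | P i) iter n Aop (F i) x.
Proof.
elim: n x => [|n IH] x //=.
by rewrite -Aop_sum; apply: Aop_ext => y; rewrite IH.
Qed.

Lemma iter_transl n h r x :
  iter n Aop (fun y => h (gmul r y)) x = iter n Aop h (gmul r x).
Proof.
elim: n x => [|n IH] x //=.
by rewrite -Aop_transl; apply: Aop_ext => y; rewrite IH.
Qed.

Lemma iter_bounds n h a b : (forall y, a <= h y <= b) ->
  forall x, a <= iter n Aop h x <= b.
Proof.
move=> H x; apply/andP; split.
  by rewrite -(iter_const n a x); apply: iter_mono => y; case/andP: (H y).
by rewrite -(iter_const n b x); apply: iter_mono => y; case/andP: (H y).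
Qed.

Lemma iter_ge0 n h : (forall y, 0 <= h y) -> forall x, 0 <= iter n Aop h x.
Proof.
move=> H x; rewrite -(iter_const n 0 x); exact: iter_mono.
Qed.

Definition cst : R := (2 * k%:R)^-1.

Lemma cst_gt0 : 0 < cst.
Proof. by rewrite invr_gt0 mulr_gt0 // ltr0n. Qed.

Lemma cst_le_half : cst <= 2^-1.
Proof.
rewrite /cst invfM ler_piMr ?invr_ge0 // invf_le1 ?ler1n ?ltr0n //.
Qed.

Lemma doeblin n (v : seq 'I_k) h : (size v <= n)%N -> (forall y, 0 <= h y) ->
  forall x, cst ^+ n * h (gmul x (word_prod gens v)) <= iter n Aop h x.
Proof.
move=> + h0; elim: n v => [|n IH] v.
  rewrite leqn0 => /nilP -> x /=; by rewrite /word_prod /= gmul1r expr0 mul1r.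
case: v => [|s v] /= Hs x.
  have := @Aop_single (iter n Aop h) x None (iter_ge0 n h0) => /= H.
  apply: le_trans H; rewrite exprS -mulrA ler_pM ?cst_le_half ?cst_gt0 //.
    by rewrite ltW ?cst_gt0.
  by rewrite mulr_ge0 // exprn_ge0 // ltW ?cst_gt0.
  by apply: IH.
have := @Aop_single (iter n Aop h) x (Some s) (iter_ge0 n h0) => /= H.
apply: le_trans H; rewrite exprS -mulrA (ler_wpM2l (ltW cst_gt0)) //.
have -> : word_prod gens (s :: v) = gmul (gens s) (word_prod gens v).
  by rewrite /word_prod /= -/(word_prod gens v) foldl_wp gmul1.
by rewrite gmulA; apply: IH.
Qed.

End Walk.

Lemma exists_min (R : realType) (T:finType) (P : pred T) (F : T -> R) t0 : P t0 ->
  exists2 t, P t & forall u, P u -> F t <= F u.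
Proof. move=> Pt0. case: (arg_minP F Pt0) => t Pt H. by exists t. Qed.
Lemma exists_max (R : realType) (T:finType) (P : pred T) (F : T -> R) t0 : P t0 ->
  exists2 t, P t & forall u, P u -> F u <= F t.
Proof. move=> Pt0. case: (arg_maxP F Pt0) => t Pt H. by exists t. Qed.

Section Quot.
Variable R : realType.
Variable G : group.
Variable k : nat.
Variable gens : 'I_k -> G.
Hypothesis k_gt0 : (0 < k)%N.
Local Notation e := (gone G).
Local Notation A := (Aop gens).

Variable T : finType.
Variable f : G -> T.
Variable N : G -> Prop.
Hypothesis hN : normal_subgroup N.
Hypothesis hf : forall x y, f x = f y <-> N (gmul (ginv x) y).

Definition Sim := [set t | `[< exists x, f x = t >]].
Variable rep : T -> G.
Hypothesis hrep : forall t, t \in Sim -> f (rep t) = t.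
Variable v : T * T -> seq 'I_k.
Hypothesis hv : forall p, gmul (rep p.1) (word_prod gens (v p)) = rep p.2.

Lemma in_S x : f x \in Sim.
Proof. by rewrite inE; apply/asboolP; exists x. Qed.

Lemma f_step x y g : f x = f y -> f (gmul x g) = f (gmul y g).
Proof.
move/hf => H; apply/hf; have := Nconj hN g H.
by rewrite ginvM -!gmulA.
Qed.

Definition finv (h : G -> R) := forall x y, f x = f y -> h x = h y.

Lemma Aop_inv h : finv h -> finv (A h).
Proof.
move=> H x y E; apply: eq_bigr => [[i|]] _ /=.
  by rewrite (H _ _ (f_step _ E)).
by rewrite (H _ _ E).
Qed.

Lemma iter_inv n h : finv h -> finv (iter n A h).
Proof. by move=> H; elim: n => [|n IH] //=; apply: Aop_inv. Qed.

Definition indz (z : G) : G -> R := fun y => (f y == f z)%:R.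
Definition Dd := (\max_(p : T * T) size (v p)).+1.
Definition delta := cst R k ^+ Dd.

Lemma delta_gt0 : 0 < delta.
Proof. by rewrite exprn_gt0 // cst_gt0. Qed.

Lemma delta_le1 : delta <= 1.
Proof.
apply: exprn_ile1; first exact: ltW (cst_gt0 R k_gt0).
apply: le_trans (cst_le_half R k_gt0) _.
by rewrite invf_le1 ?ler1n.
Qed.

Lemma lower z x : delta <= iter Dd A (indz z) x.
Proof.
have iv : finv (indz z) by move=> a b E; rewrite /indz E.
have fx : f x = f (rep (f x)) by rewrite hrep // in_S.
rewrite (iter_inv Dd iv fx).
have sz : (size (v (f x, f z)) <= Dd)%N.
  rewrite /Dd; apply: leqW; exact: leq_bigmax.
have h0 : forall y, 0 <= indz z y by move=> y; rewrite /indz ler0n.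
have := doeblin gens k_gt0 sz h0 (rep (f x)).
by rewrite (hv (f x, f z)) /= /indz hrep ?in_S // eqxx mulr1.
Qed.

Lemma extremes g : finv g -> exists zlo zhi, forall y, g zlo <= g y <= g zhi.
Proof.
move=> ig.
have S0 : f e \in Sim by apply: in_S.
have [tlo Slo Hlo] := @exists_min R T (fun t => t \in Sim) (fun t => g (rep t)) _ S0.
have [thi Shi Hhi] := @exists_max R T (fun t => t \in Sim) (fun t => g (rep t)) _ S0.
exists (rep tlo), (rep thi) => y.
have -> : g y = g (rep (f y)) by apply: ig; rewrite hrep ?in_S.
by rewrite Hlo ?Hhi ?in_S.
Qed.

Lemma contract g zlo zhi x y : finv g -> (forall w, g zlo <= g w <= g zhi) ->
  iter Dd A g x - iter Dd A g y <= (1 - delta) * (g zhi - g zlo).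
Proof.
move=> ig H.
have up : forall w, g w <= g zhi + (- (g zhi - g zlo)) * indz zlo w.
  move=> w; rewrite /indz; case: eqP => [E|_].
    by rewrite (ig _ _ E) mulr1; lra.
  by rewrite mulr0 addr0; case/andP: (H w).
have := iter_mono gens Dd up x; rewrite iter_affine // => Hx.
have := iter_bounds gens k_gt0 Dd H y => /andP[Hy _].
have := lower zlo x => Hd.
have := H zlo => /andP[_ Hlh].
have Hhl : 0 <= g zhi - g zlo by lra.
nra.
Qed.

Definition h0 : G -> R := indz e.
Local Notation gn n := (iter n A h0).

Lemma h0_bounds y : 0 <= h0 y <= 1.
Proof. by rewrite /h0 /indz; case: (f y == f e); rewrite /= ?ler01 ?lexx. Qed.

Lemma osc_mono m n eta : (m <= n)%N -> (forall x y, gn m x - gn m y <= eta) ->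
  forall x y, gn n x - gn n y <= eta.
Proof.
move=> mn H x y.
have [zlo [zhi Hz]] := extremes (iter_inv m (fun a b (E : f a = f b) =>
   (congr1 (fun t => (t == f e)%:R) E) : h0 a = h0 b)).
rewrite -(subnK mn) !iterD.
have := iter_bounds gens k_gt0 (n - m) Hz x => /andP[_ H1].
have := iter_bounds gens k_gt0 (n - m) Hz y => /andP[H2 _].
have := H zhi zlo; lra.
Qed.

Lemma h0_inv : finv h0.
Proof. by move=> a b E; rewrite /h0 /indz E. Qed.

Lemma osc q : forall x y, gn (q * Dd) x - gn (q * Dd) y <= (1 - delta) ^+ q.
Proof.
elim: q => [|q IH] x y.
  rewrite mul0n /= expr0.
  by have := h0_bounds x; have := h0_bounds y; lra.
rewrite mulSn iterD.
have [zlo [zhi Hz]] := extremes (iter_inv (q * Dd) h0_inv).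
apply: le_trans (contract x y (iter_inv _ h0_inv) Hz) _.
rewrite exprS ler_wpM2l //; first by have := delta_le1; lra.
Qed.

Lemma mean_one y : \sum_(t in Sim) h0 (gmul (rep t) y) = 1.
Proof.
have key : forall t, t \in Sim -> h0 (gmul (rep t) y) = (t == f (ginv y))%:R.
  move=> t St; rewrite /h0 /indz; congr (_%:R); congr (nat_of_bool _).
  apply/idP/idP => /eqP E; apply/eqP.
    rewrite -(hrep St); apply/hf; apply: (@Ncomm G N hN).
    by move/hf: E; rewrite gmul1r ginvM.
  apply/(hf (gmul (rep t) y) e); rewrite gmul1r ginvM; apply: (@Ncomm G N hN).
  by apply/(hf (rep t) (ginv y)); rewrite hrep // E.
rewrite (eq_bigr _ key) (bigD1 (f (ginv y))) ?in_S //= eqxx big1 ?addr0 //.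
by move=> t /andP[_ /negbTE ->].
Qed.

Lemma mean n : \sum_(t in Sim) gn n (rep t) = 1.
Proof.
transitivity (\sum_(t in Sim) iter n A (fun y => h0 (gmul (rep t) y)) e).
  by apply: eq_bigr => t _; rewrite iter_transl gmul1r.
rewrite -iter_sum; transitivity (iter n A (fun _ => 1 : R) e); last first.
  by rewrite iter_const.
by apply: iter_ext => y; exact: mean_one.
Qed.

End Quot.

Lemma geom (R : realType) (d eps : R) : 0 < d -> d <= 1 -> 0 < eps ->
  exists q, (1 - d) ^+ q <= eps.
Proof.
move=> d0 d1 e0.
have bern : forall q : nat, (1 - d) ^+ q * (1 + q%:R * d) <= 1.
  elim=> [|q IH]; first by rewrite expr0 mul0r addr0 mulr1.
  have a0 : 0 <= (1 - d) ^+ q by rewrite exprn_ge0 // subr_ge0.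
  have q0 : 0 <= (q%:R : R) by rewrite ler0n.
  rewrite exprS -addn1 natrD.
  set a := (1 - d) ^+ q in a0 IH *. set Q := (q%:R : R) in q0 IH *.
  have P : 0 <= a * ((Q + 1) * (d * d)).
    by rewrite !mulr_ge0 // ?addr_ge0 // ltW.
  nra.
have b0 : 0 <= (d * eps)^-1 by rewrite invr_ge0 ltW // mulr_gt0.
have := archi_boundP b0; set q := Num.Def.archi_bound _ => Hq.
exists q.
have := bern q.
have a0 : 0 <= (1 - d) ^+ q by rewrite exprn_ge0 // subr_ge0.
set a := (1 - d) ^+ q in a0 *. set Q := (q%:R : R) in Hq *.
have de0 : 0 < d * eps by rewrite mulr_gt0.
have : 1 < Q * (d * eps).
  by rewrite -(ltr_pdivrMr _ _ de0) div1r.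
nra.
Qed.

Section Conv.
Variable R : realType.
Variable G : group.
Variable k : nat.
Variable gens : 'I_k -> G.
Hypothesis k_gt0 : (0 < k)%N.
Local Notation e := (gone G).
Local Notation A := (Aop gens).
Variable T : finType.
Variable f : G -> T.
Variable N : G -> Prop.
Hypothesis hN : normal_subgroup N.
Hypothesis hf : forall x y, f x = f y <-> N (gmul (ginv x) y).
Hypothesis hgen : generates gens.

Lemma conv eps : 0 < eps -> exists n0, forall n, (n0 <= n)%N ->
  `|iter n A (fun y => (f y == f e)%:R) e - (#|Sim f|%:R)^-1 : R| <= eps.
Proof.
move=> eps0.
have [rep hrep] : {rep : T -> G & forall t, t \in Sim f -> f (rep t) = t}.
  apply: (@choice T G (fun t x => t \in Sim f -> f x = t)) => t; case: (pselect (exists x, f x = t)) => [[x Hx]|nx].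
    by exists x.
  exists e => St; exfalso; apply: nx; move: St; rewrite inE => /asboolP.
  by [].
have [v hv] : {v : T * T -> seq 'I_k &
    forall p, gmul (rep p.1) (word_prod gens (v p)) = rep p.2}.
  apply: (@choice (T * T) (seq 'I_k) (fun p w => gmul (rep p.1) (word_prod gens w) = rep p.2)) => p; have [w Hw] := hgen (gmul (ginv (rep p.1)) (rep p.2)).
  by exists w; rewrite -Hw gmulKV.
have [q Hq] := geom (delta_gt0 R k_gt0 v) (delta_le1 R k_gt0 v) eps0.
exists (q * Dd v)%N => n qn.
have Hosc := osc_mono k_gt0 hN hf hrep qn (osc R k_gt0 hN hf hrep hv q).
have Hm := mean R gens k_gt0 hN hf hrep n.
set g := iter n A _ in Hosc Hm *.
set eta := (1 - delta R v) ^+ q in Hq Hosc.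
have S0 : f e \in Sim f by apply: in_S.
have c0 : (0 < #|Sim f|)%N by apply/card_gt0P; exists (f e).
have up : \sum_(t in Sim f) g (rep t) <= \sum_(t in Sim f) (g e + eta).
  by apply: ler_sum => t _; have := Hosc (rep t) e; lra.
have lo : \sum_(t in Sim f) (g e - eta) <= \sum_(t in Sim f) g (rep t).
  by apply: ler_sum => t _; have := Hosc e (rep t); lra.
rewrite sumr_const -mulr_natl Hm in up.
rewrite sumr_const -mulr_natl Hm in lo.
set u := (#|Sim f|%:R : R) in up lo *.
have u0 : 0 < u by rewrite ltr0n.
have uw : u * u^-1 = 1 by rewrite mulfV // gt_eqF.
have w0 : 0 < u^-1 by rewrite invr_gt0.
set w := u^-1 in uw w0 *.
rewrite ler_norml; apply/andP; split; nra.
Qed.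

End Conv.

Lemma inj_family (G : group) : infinite_group G -> forall L, exists g : 'I_L -> G, injective g.
Proof.
move=> inf; elim=> [|L [g ig]].
  by exists (fun _ => gone G); case.
have : ~ (forall x, exists i, g i = x) by move=> H; apply: (inf L); exists g.
move/existsNP => [x /forallNP hx].
exists (fun i : 'I_L.+1 => if unlift ord_max i is Some j then g j else x).
move=> i j; case: unliftP => [i'|] ->; case: unliftP => [j'|] -> //.
- by move/ig ->.
- by move=> E; exfalso; apply: (hx i').
- by move=> E; exfalso; apply: (hx j').
Qed.

Lemma big_quot (G : group) : infinite_group G -> residually_finite G -> forall L : nat,
  exists (T : finType) (f : G -> T) (N : G -> Prop), normal_subgroup N /\
    (forall x y, f x = f y <-> N (gmul (ginv x) y)) /\ (L <= #|Sim f|)%N.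
Proof.
move=> inf rf L.
have [g ig] := inj_family inf L.
pose Q (p : 'I_L * 'I_L) (q : (G -> Prop) * (nat * (G -> nat))) :=
  [/\ normal_subgroup q.1, (forall x, q.2.2 x < q.2.1)%N,
      (forall x y, q.2.2 x = q.2.2 y <-> q.1 (gmul (ginv x) y)) &
      (p.1 != p.2 -> ~ q.1 (gmul (ginv (g p.1)) (g p.2)))].
have [NN hNN] : {NN : 'I_L * 'I_L -> (G -> Prop) * (nat * (G -> nat)) &
    forall p, Q p (NN p)}.
  apply: (@choice _ _ Q) => p.
  case: (eqVneq p.1 p.2) => [E|ne].
    exists ((fun _ => True), (1%N, fun _ => 0%N)); rewrite /Q; split => //=.
    by rewrite E eqxx.
  have neq1 : gmul (ginv (g p.1)) (g p.2) <> gone G.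
    by move/ginv_eq1/ig => E; rewrite E eqxx in ne.
  have [Np [[nNp [m [fm [surj fib]]]] notN]] := rf _ neq1.
  exists (Np, (m, fun x => nat_of_ord (fm x))); rewrite /Q; split => //=.
  move=> x y; split => [E|H]; first by apply/fib; apply: val_inj.
  by move/fib: H => ->.
pose B := (\max_(p : 'I_L * 'I_L) (NN p).2.1)%N.
have ltB : forall p x, ((NN p).2.2 x < B.+1)%N.
  move=> p x; case: (hNN p) => _ lt _ _.
  apply: leq_trans (lt x) _; apply: leqW; rewrite /B.
  exact: leq_bigmax.
pose F (x : G) : {ffun 'I_L * 'I_L -> 'I_B.+1} := [ffun p => inord ((NN p).2.2 x)].
have FE : forall x y, F x = F y <-> forall p, (NN p).2.2 x = (NN p).2.2 y.
  move=> x y; split => [E p | H].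
    have := congr1 (fun h : {ffun 'I_L * 'I_L -> 'I_B.+1} => nat_of_ord (h p)) E.
    by rewrite /= !ffunE !inordK.
  by apply/ffunP => p; rewrite !ffunE H.
exists {ffun 'I_L * 'I_L -> 'I_B.+1}, F, (fun x => forall p, (NN p).1 x).
split; [|split].
- split.
  + by move=> p; case: (hNN p) => nN _ _ _; apply: N1.
  + move=> x y Hx Hy p; case: (hNN p) => nN _ _ _; case: nN => _ nB _.
    exact: nB.
  + move=> g0 x Hx p; case: (hNN p) => nN _ _ _; case: nN => _ _ nC.
    exact: nC.
- move=> x y; rewrite FE; split => H p.
    by case: (hNN p) => _ _ fib _; apply/fib.
  by case: (hNN p) => _ _ fib _; apply/fib.
- have injFg : injective (fun i => F (g i)).
    move=> i j /FE E; apply/eqP; apply/negPn/negP => ne.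
    case: (hNN (i, j)) => _ _ fib nt; apply: (nt ne) => /=.
    by apply/fib; apply: E.
  have sub : [set F (g i) | i : 'I_L] \subset Sim F.
    by apply/subsetP => t /imsetP [i _ ->]; apply: in_S.
  rewrite -{1}[L]card_ord -(card_imset _ injFg).
  exact: subset_leq_card.
Qed.

Lemma least_natP (P : nat -> Prop) : (exists m, P m) ->
  P (least_nat P) /\ forall m, P m -> (least_nat P <= m)%N.
Proof.
move=> ex; rewrite /least_nat; case: pselect => [h|//].
case: ex_minnP => m /asboolP Pm minm; split => // m' Pm'.
by apply: minm; apply/asboolP.
Qed.

Lemma least_nat0 (P : nat -> Prop) : ~ (exists m, P m) -> least_nat P = 0%N.
Proof. by move=> nex; rewrite /least_nat; case: pselect. Qed.

Lemma Lambda_normal (G : group) j : normal_subgroup (@Lambda G j).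
Proof.
split.
- by move=> N nN _; apply: N1.
- move=> x y Hx Hy N nN Hm; have [_ nB _] := nN.
  exact: nB _ _ (Hx N nN Hm) (Hy N nN Hm).
- move=> g x Hx N nN Hm; have [_ _ nC] := nN.
  exact: nC _ _ (Hx N nN Hm).
Qed.

Lemma Lambda_D (G : group) (x : G) j : residually_finite G -> x <> gone G ->
  Lambda j x -> (j < D x)%N.
Proof.
move=> rf nx Lx.
have [N [[nN [m hm]] notN]] := rf x nx.
have ex : exists m, exists N, normal_subgroup N /\ has_index N m /\ ~ N x.
  by exists m, N.
have [[N' [nN' [hi nN'x]]] _] := least_natP ex.
rewrite ltnNge; apply/negP => le; apply: nN'x.
by apply: Lx nN' _; exists (D x).
Qed.

Lemma common (P : nat -> nat -> Prop) :
  (forall j, exists n0, forall n, (n0 <= n)%N -> P j n) ->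
  forall K, exists n0, forall n, (n0 <= n)%N -> forall j, (j < K)%N -> P j n.
Proof.
move=> H; elim=> [|K [n0 IH]]; first by exists 0%N.
have [nK HK] := H K.
exists (maxn n0 nK) => n le j; rewrite ltnS leq_eqVlt => /orP [/eqP ->|lt].
  by apply: HK; apply: leq_trans le; apply: leq_maxr.
by apply: IH => //; apply: leq_trans le; apply: leq_maxl.
Qed.

Lemma sum_lt_nat (d K : nat) : (\sum_(2 <= j < K) (j < d : nat) <= minn K d)%N.
Proof.
elim: K => [|K IH]; first by rewrite big_geq.
case: (ltnP K 2) => hK; first by rewrite big_geq.
rewrite big_nat_recr //=.
case: (ltnP K d) => h /=; lia.
Qed.

Theorem corollary4p2 (R : realType) (G : group) (k : nat) (gens : 'I_k -> G) :
  infinite_group G ->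
  residually_finite G ->
  injective gens ->
  symmetric_gens gens ->
  generates gens ->
  (forall M : R, exists K : nat,
      (M < \sum_(2 <= j < K) ((gindex (@Lambda G j))%:R)^-1)%R) ->
  forall M : R, exists N : nat, forall n : nat, (N <= n)%N ->
    (M < lazy_walk_expect gens (fun g => (D g)%:R) n)%R.
Proof.
move=> inf rf _ _ hgen hsum M0.
have k_gt0 : (0 < k)%N.
  rewrite lt0n; apply/eqP => k0; subst k.
  apply: (inf 1%N); exists (fun _ => gone G) => x.
  have [w ->] := hgen x; exists ord0; case: w => [|i w] //; by case: i.
have [K HK] := hsum (M0 + 1).
set eps : R := ((4 * K.+1)%:R)^-1.
have eps0 : 0 < eps by rewrite invr_gt0 ltr0n.
have [T' [f' [N' [nN' [hf' cardS]]]]] := big_quot inf rf (4 * K.+1).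
have [n1 Hn1] := conv k_gt0 nN' hf' hgen eps0.
pose ind j (y : G) : R := (`[< @Lambda G j y >])%:R.
have HL : forall j, exists n0, forall n, (n0 <= n)%N ->
    ((gindex (@Lambda G j))%:R)^-1 - eps <= iter n (Aop gens) (ind j) (gone G).
  move=> j; case: (pselect (exists m, has_index (@Lambda G j) m)) => [ex|nex].
    have [hm _] := least_natP ex.
    have [fj [surj fib]] := hm.
    have [n0 Hn0] := conv k_gt0 (Lambda_normal G j) fib hgen eps0.
    exists n0 => n le; have := Hn0 n le.
    have -> : #|Sim fj| = least_nat (has_index (@Lambda G j)).
      have -> : Sim fj = setT.
        by apply/setP => t; rewrite inE in_setT; apply/asboolP; apply: surj.
      by rewrite cardsT card_ord.
    rewrite (@iter_ext _ _ _ gens n _ (ind j)); last first.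
      move=> y; rewrite /ind; congr (_%:R); congr (nat_of_bool _).
      apply/idP/idP => H.
        have := proj1 (fib y (gone G)) (eqP H).
        rewrite gmul1r => /(NV (Lambda_normal G j)); rewrite ginvK => Lj.
        exact/asboolP.
      apply/eqP; apply: (proj2 (fib y (gone G))); rewrite gmul1r.
      by apply: (NV (Lambda_normal G j)); apply/asboolP.
    rewrite /gindex; set a := iter _ _ _ _; set b := (_%:R)^-1.
    by rewrite ler_norml => /andP [H1 H2]; lra.
  exists 0%N => n _; rewrite /gindex least_nat0 // invr0.
  have : 0 <= iter n (Aop gens) (ind j) (gone G).
    by apply: iter_ge0 => // y; rewrite /ind ler0n.
  lra.
have [n2 Hn2] := common HL K.
exists (maxn n1 n2) => n le.
have le1 : (n1 <= n)%N by apply: leq_trans le; apply: leq_maxl.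
have le2 : (n2 <= n)%N by apply: leq_trans le; apply: leq_maxr.
rewrite expectE.
pose hp (y : G) : R := (f' y == f' (gone G))%:R.
pose phi (y : G) : R := \sum_(2 <= j < K) ind j y + (- K%:R) * hp y.
have ind01 : forall j y, 0 <= ind j y <= 1.
  by move=> j y; rewrite /ind; case: (`[< _ >]); rewrite /= ?ler01 ?lexx.
have pw : forall y, phi y <= (D y)%:R.
  move=> y; rewrite /phi /hp.
  case: eqP => [E|NE].
    have : \sum_(2 <= j < K) ind j y <= (K - 2)%:R.
      apply: le_trans (ler_sum _ (fun j _ => proj2 (andP (ind01 j y)))) _.
      by rewrite sumr_const_nat.
    have : ((K - 2)%:R : R) <= K%:R by rewrite ler_nat leq_subr.
    have : (0 : R) <= (D y)%:R by rewrite ler0n.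
    rewrite mulr1; lra.
  have ny : y <> gone G by move=> Ey; apply: NE; rewrite Ey.
  rewrite mulr0 addr0.
  apply: le_trans (_ : \sum_(2 <= j < K) ((j < D y)%N%:R : R) <= _).
    apply: ler_sum => j _; rewrite /ind.
    case: (pselect (Lambda j y)) => [Lj|nLj].
      by rewrite (asboolT Lj) (Lambda_D rf ny Lj).
    by rewrite (asboolF nLj) ler0n.
  rewrite -natr_sum ler_nat.
  apply: leq_trans (sum_lt_nat (D y) K) _; exact: geq_minr.
apply: lt_le_trans (iter_mono gens n pw (gone G)).
rewrite /phi iter_lin (iter_sum gens n (index_iota 2 K) xpredT ind).
have Hj : \sum_(2 <= j < K) (((gindex (@Lambda G j))%:R)^-1 - eps)
    <= \sum_(2 <= j < K) iter n (Aop gens) (ind j) (gone G).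
  apply: ler_sum_nat => j /andP [_ jK]; exact: Hn2.
rewrite sumrB sumr_const_nat in Hj.
have Hp := Hn1 n le1; rewrite ler_norml in Hp; case/andP: Hp => _ Hp.
set a := iter n _ (fun y => _) _ in Hp.
have -> : iter n (Aop gens) hp (gone G) = a by [].
set S1 := \sum_(2 <= j < K) _ in HK Hj.
set S2 := \sum_(2 <= j < K) _ in Hj *.
set u := (#|Sim f'|%:R : R) in Hp.
have u0 : 0 < u by rewrite ltr0n; apply: leq_trans cardS.
have uL : ((4 * K.+1)%:R : R) <= u by rewrite ler_nat.
have uw : u * u^-1 = 1 by rewrite mulfV // gt_eqF.
have w0 : 0 < u^-1 by rewrite invr_gt0.
set w := u^-1 in Hp uw w0.
have Le : ((4 * K.+1)%:R : R) * eps = 1 by rewrite mulfV // gt_eqF // ltr0n.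
rewrite natrM -addn1 natrD in uL Le.
have KK : ((K - 2)%:R : R) <= K%:R by rewrite ler_nat leq_subr.
have K0 : (0 : R) <= (K - 2)%:R by rewrite ler0n.
rewrite -mulr_natr in Hj.
set Kr := (K%:R : R) in KK uL Le *.
set Km := ((K - 2)%:R : R) in KK K0 Hj.
have a0 : 0 <= a by apply: iter_ge0 => // y; case: (_ == _); rewrite ?ler01 ?lexx.
have Kr0 : 0 <= Kr by rewrite ler0n.
nra.
Qed.
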